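(* Let $(\mathcal{P},d)$ be a 1-2-metric and $\alpha>0$. In the greedy-routing network creation game on $(\mathcal{P},d)$ with edge price $\alpha$, every Nash equilibrium is a social optimum, and every social optimum is a Nash equilibrium.
   Context: A 1-2-metric is a finite metric space $(\mathcal{P},d)$ with $d(u,v)\in\{1,2\}$ for all distinct $u,v$. Game: the agents are the points of $\mathcal{P}$ ($n=|\mathcal{P}|\ge2$). A strategy of agent $u$ is a set $S_u\subseteq\mathcal{P}\setminus\{u\}$; a strategy profile is $\mathbf{s}=(S_u)_{u\in\mathcal{P}}$, and $(S'_u,\mathbf{s}_{-u})$ denotes $\mathbf{s}$ with $S_u$ replaced by $S'_u$. The profile defines the directed network $G(\mathbf{s})$ on $\mathcal{P}$ with arcs $(u,v)$ for $v\in S_u$, arc $(u,v)$ having length $d(u,v)$. A greedy path from $u$ to $v$ in $G$ is a directed path $u=x_1,\dots,x_j=v$ of arcs of $G$ with $d(x_i,v)>d(x_{i+1},v)$ for all $i$; its length is the sum of its arc lengths. $\mathrm{stretch}_{G}(u,v)$ equals the minimum length of a greedy path from $u$ to $v$ divided by $d(u,v)$ if such a path exists, and equals $Z$ otherwise, where $Z$ is a fixed, sufficiently large penalty constant. The cost of agent $u$ is $c_u(\mathbf{s})=\sum_{v\neq u}\mathrm{stretch}_{G(\mathbf{s})}(u,v)+\alpha|S_u|$, the social cost is $\sum_u c_u(\mathbf{s})$, and a social optimum is a profile of minimum social cost. A Nash equilibrium (NE) is a profile $\mathbf{s}$ such that $c_u(\mathbf{s})\le c_u(S'_u,\mathbf{s}_{-u})$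 for every agent $u$ and every $S'_u\subseteq\mathcal{P}\setminus\{u\}$. *)

(* Defs.v *)
From HB Require Import structures.
From mathcomp Require Import all_boot all_order all_algebra.
From mathcomp Require Import boolp.
Set Implicit Arguments. Unset Strict Implicit. Unset Printing Implicit Defensive.
Import Order.TTheory GRing.Theory Num.Theory.
Local Open Scope ring_scope.

Section GreedyGame.
Variable T : finType.
Variable d : T -> T -> nat.

Definition one_two_metric : Prop :=
  [/\ forall u, d u u = 0%N,
      forall u v, d u v = d v u,
      forall u v w, (d u w <= d u v + d v w)%N
    & forall u v, u != v -> (d u v == 1%N) || (d u v == 2%N)].

(* A strategy profile: s u is the set of points agent u buys arcs to. *)
Definition profile := {ffun T -> {set T}}.

Definition valid_strategy (u : T) (S : {set T}) : bool := u \notin S.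
Definition valid_profile (s : profile) : Prop := forall u, valid_strategy u (s u).

Definition update (s : profile) (u : T) (S : {set T}) : profile :=
  [ffun w => if w == u then S else s w].

(* A greedy path u = x_1, ..., x_j = v in G(s), represented by the list
   [x_2; ...; x_j] of the points after u. *)
Definition greedy_step (s : profile) (v : T) : rel T :=
  fun a b => (b \in s a) && (d b v < d a v)%N.

Definition is_greedy_path (s : profile) (u v : T) (p : seq T) : bool :=
  path (greedy_step s v) u p && (last u p == v).

Definition path_length (u : T) (p : seq T) : nat := sumn (pairmap d u p).

Definition greedy_lengths (s : profile) (u v : T) : pred nat :=
  fun n => `[< exists p, is_greedy_path s u v p /\ path_length u p = n >].

Definition has_greedy_path (s : profile) (u v : T) : Prop :=
  exists p, is_greedy_path s u v p.

(* minimum length of a greedy path from u to v (0 if there is none; unused then) *)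
Definition min_greedy_length (s : profile) (u v : T) : nat :=
  match pselect (exists n, greedy_lengths s u v n) with
  | left H => ex_minn H
  | right _ => 0%N
  end.

Variable R : realFieldType.

Definition stretch (Z : R) (s : profile) (u v : T) : R :=
  if `[< has_greedy_path s u v >]
  then (min_greedy_length s u v)%:R / (d u v)%:R
  else Z.

Definition cost (Z alpha : R) (s : profile) (u : T) : R :=
  \sum_(v | v != u) stretch Z s u v + alpha * #|s u|%:R.

Definition social_cost (Z alpha : R) (s : profile) : R :=
  \sum_u cost Z alpha s u.

Definition social_optimum (Z alpha : R) (s : profile) : Prop :=
  valid_profile s /\
  forall s' : profile, valid_profile s' -> social_cost Z alpha s <= social_cost Z alpha s'.

Definition nash_equilibrium (Z alpha : R) (s : profile) : Prop :=
  valid_profile s /\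
  forall (u : T) (S : {set T}), valid_strategy u S ->
    cost Z alpha s u <= cost Z alpha (update s u S) u.

End GreedyGame.

(* Main.v *)
Require Import Defs.
From HB Require Import structures.
From mathcomp Require Import all_boot all_order all_algebra.
From mathcomp Require Import boolp.
From mathcomp Require Import zify.
Import Order.TTheory GRing.Theory Num.Theory.
Local Open Scope ring_scope.
Set Implicit Arguments. Unset Strict Implicit.

Lemma path_agree (T : Type) (e e' : rel T) (P : pred T) :
  (forall a b, P a -> e a b = e' a b) -> (forall a b, P a -> e a b -> P b) ->
  forall p x, P x -> path e x p = path e' x p.
Proof.
move=> Ag Cl; elim=> [//|y p IH] x Px /=.
rewrite -Ag //; case E: (e x y) => //=; apply: IH; exact: Cl E.
Qed.

Lemma d0 (T : finType) (d : T -> T -> nat) a b :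
  one_two_metric d -> d a b = 0%N -> a = b.
Proof.
case=> _ _ _ H E; apply/eqP; apply/negPn/negP => /H; by rewrite E.
Qed.

Lemma dle2 (T : finType) (d : T -> T -> nat) a b :
  one_two_metric d -> (d a b <= 2)%N.
Proof.
move=> M; case: (eqVneq a b) => [->|ne]; first by case: M => ->.
by case: M => _ _ _ /(_ _ _ ne) /orP [] /eqP ->.
Qed.

Lemma dpos (T : finType) (d : T -> T -> nat) a b :
  one_two_metric d -> a != b -> (0 < d a b)%N.
Proof.
by move=> M ne; case: M => _ _ _ /(_ _ _ ne) /orP [] /eqP ->.
Qed.

Definition full (T : finType) (d : T -> T -> nat) (s : profile T) : bool :=
  [forall a, forall b, (d a b == 1%N) ==> (b \in s a)].

Lemma stretch_ext (T : finType) (d : T -> T -> nat) (R : realFieldType) (Z : R)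
  (s s' : profile T) u v :
  (forall p, is_greedy_path d s u v p = is_greedy_path d s' u v p) ->
  stretch d Z s u v = stretch d Z s' u v.
Proof.
move=> H.
have Eg : greedy_lengths d s u v = greedy_lengths d s' u v.
  apply/funext => n; rewrite /greedy_lengths.
  have -> : (exists p, is_greedy_path d s u v p /\ path_length d u p = n) =
            (exists p, is_greedy_path d s' u v p /\ path_length d u p = n).
    by apply/propext; split => -[p [H1 H2]]; exists p; [rewrite -H | rewrite H].
  by [].
have Eh : has_greedy_path d s u v = has_greedy_path d s' u v.
  by apply/propext; split => -[p H1]; exists p; [rewrite -H | rewrite H].
by rewrite /stretch /min_greedy_length Eg Eh.
Qed.

Lemma stretch_full (T : finType) (d : T -> T -> nat) (R : realFieldType) (Z : R)
  (s s' : profile T) u v :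
  one_two_metric d -> full d s -> full d s' -> s u = s' u ->
  stretch d Z s u v = stretch d Z s' u v.
Proof.
move=> M F F' E; apply: stretch_ext => p.
rewrite /is_greedy_path; congr (_ && _).
apply: (path_agree (P := fun a => (a == u) || (d a v < d u v)%N)).
- move=> a b /orP [/eqP ->|lt]; first by rewrite /greedy_step E.
  rewrite /greedy_step; case: (ltnP (d b v) (d a v)) => lt2; last by rewrite !andbF.
  have le2 := dle2 a v M; have leu := dle2 u v M.
  have da1 : d a v = 1%N by lia.
  have db0 : d b v = 0%N by lia.
  have -> := d0 M db0.
  move/forallP: F => /(_ a) /forallP /(_ v); rewrite da1 eqxx /= => ->.
  by move/forallP: F' => /(_ a) /forallP /(_ v); rewrite da1 eqxx /= => ->.
- move=> a b /orP [/eqP ->|lt] /andP [_ lt2]; apply/orP; right => //.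
  exact: ltn_trans lt2 lt.
- by rewrite eqxx.
Qed.

Lemma cost_full (T : finType) (d : T -> T -> nat) (R : realFieldType) (Z alpha : R)
  (s s' : profile T) u :
  one_two_metric d -> full d s -> full d s' -> s u = s' u ->
  cost d Z alpha s u = cost d Z alpha s' u.
Proof.
move=> M F F' E; rewrite /cost E; congr (_ + _).
by apply: eq_bigr => v _; apply: stretch_full.
Qed.

Lemma stretch_ge0 (T : finType) (d : T -> T -> nat) (R : realFieldType) (Z : R)
  (s : profile T) u v : 0 <= Z -> 0 <= stretch d Z s u v.
Proof.
move=> Z0; rewrite /stretch; case: ifP => // _; exact: divr_ge0.
Qed.

Lemma cost_ge0 (T : finType) (d : T -> T -> nat) (R : realFieldType) (Z alpha : R)
  (s : profile T) u : 0 <= Z -> 0 <= alpha -> 0 <= cost d Z alpha s u.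
Proof.
move=> Z0 a0; rewrite /cost addr_ge0 //; last exact: mulr_ge0.
by apply: sumr_ge0 => v _; apply: stretch_ge0.
Qed.

Lemma cost_le_social (T : finType) (d : T -> T -> nat) (R : realFieldType) (Z alpha : R)
  (s : profile T) u : 0 <= Z -> 0 <= alpha -> cost d Z alpha s u <= social_cost d Z alpha s.
Proof.
move=> Z0 a0; rewrite /social_cost (bigD1 u) //= lerDl.
by apply: sumr_ge0 => w _; apply: cost_ge0.
Qed.

Lemma cost_nonfull (T : finType) (d : T -> T -> nat) (R : realFieldType) (Z alpha : R)
  (s : profile T) u v : one_two_metric d -> 0 <= Z -> 0 <= alpha ->
  d u v = 1%N -> v \notin s u -> Z <= cost d Z alpha s u.
Proof.
move=> M Z0 a0 duv nv.
have nuv : v != u by apply/eqP => E; move: duv; rewrite E; case: M => ->.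
have S : stretch d Z s u v = Z.
  rewrite /stretch; case: asboolP => // -[[|b p]].
    by rewrite /is_greedy_path /= => /eqP E; move: nuv; rewrite E eqxx.
  rewrite /is_greedy_path /= /greedy_step => /andP [/andP [/andP [bin lt] _] _].
  have : d b v = 0%N by lia.
  by move/(d0 M) => E; move: bin nv; rewrite E => ->.
rewrite /cost (bigD1 v) //= S -addrA lerDl addr_ge0 //; last exact: mulr_ge0.
by apply: sumr_ge0 => w _; apply: stretch_ge0.
Qed.

Lemma cost_all (T : finType) (d : T -> T -> nat) (R : realFieldType) (Z alpha : R)
  (s : profile T) u : one_two_metric d -> 0 <= alpha -> s u = [set~ u] ->
  cost d Z alpha s u <= #|T|%:R + alpha * #|T|%:R.
Proof.
move=> M a0 E; rewrite /cost; apply: lerD; last first.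
  by apply: ler_wpM2l => //; rewrite ler_nat E; exact: max_card.
apply: (@le_trans _ _ (\sum_(v | v != u) (1 : R))).
  apply: ler_sum => v nvu.
  have uv : u != v by rewrite eq_sym.
  have dp := dpos M uv.
  have G : is_greedy_path d s u v [:: v].
    rewrite /is_greedy_path /= /greedy_step E !inE nvu /= eqxx andbT andbT.
    by case: M => -> _ _ _.
  have Gl : greedy_lengths d s u v (d u v).
    by rewrite /greedy_lengths; apply/asboolP; exists [:: v]; split => //;
       rewrite /path_length /= addn0.
  rewrite /stretch; case: asboolP => [_|[]]; last by exists [:: v].
  rewrite /min_greedy_length; case: pselect => [H|[]]; last by exists (d u v).
  case: ex_minnP => m _ Hm.
  rewrite ler_pdivrMr ?ltr0n // mul1r ler_nat; exact: Hm.
rewrite sumr_const ler_nat; exact: max_card.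
Qed.

Lemma full_update (T : finType) (d : T -> T -> nat) (s s' : profile T) u :
  full d s -> full d s' -> full d (update s u (s' u)).
Proof.
move=> F F'; apply/forallP => a; apply/forallP => b; rewrite /update ffunE.
case: (a =P u) => [->|_].
  by move/forallP: F' => /(_ u) /forallP /(_ b).
by move/forallP: F => /(_ a) /forallP /(_ b).
Qed.

Lemma nonfull_update (T : finType) (d : T -> T -> nat) (R : realFieldType) (Z alpha : R)
  (s : profile T) u S : one_two_metric d -> 0 <= Z -> 0 <= alpha ->
  full d s -> ~~ full d (update s u S) -> Z <= cost d Z alpha (update s u S) u.
Proof.
move=> M Z0 a0 F /forallPn [a /forallPn [b]]; rewrite negb_imply => /andP [/eqP dab nb].
case: (eqVneq a u) => [E|ne].
  by subst a; apply: (cost_nonfull M Z0 a0 dab nb).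
move: nb; rewrite /update ffunE (negbTE ne).
by move/forallP: F => /(_ a) /forallP /(_ b); rewrite dab eqxx /= => ->.
Qed.

Lemma nonfull_social (T : finType) (d : T -> T -> nat) (R : realFieldType) (Z alpha : R)
  (s : profile T) : one_two_metric d -> 0 <= Z -> 0 <= alpha ->
  ~~ full d s -> Z <= social_cost d Z alpha s.
Proof.
move=> M Z0 a0 /forallPn [a /forallPn [b]]; rewrite negb_imply => /andP [/eqP dab nb].
apply: le_trans (@cost_le_social _ d _ Z alpha s a Z0 a0).
exact: cost_nonfull M Z0 a0 dab nb.
Qed.

Lemma sum_constT (T : finType) (R : realFieldType) (B : R) :
  \sum_(u : T) B = #|T|%:R * B.
Proof. by rewrite sumr_const mulr_natl. Qed.

Theorem theorem2p4 (T : finType) (d : T -> T -> nat) (R : realFieldType) (alpha : R) :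
  (1 < #|T|)%N -> one_two_metric d -> 0 < alpha ->
  exists Z0 : R, forall Z : R, Z0 <= Z ->
    forall s : profile T,
      (nash_equilibrium d Z alpha s -> social_optimum d Z alpha s) /\
      (social_optimum d Z alpha s -> nash_equilibrium d Z alpha s).
Proof.
move=> n1 M apos.
have a0 : 0 <= alpha := ltW apos.
set n : R := #|T|%:R.
set B : R := n + alpha * n.
have n0 : 0 <= n by rewrite /n ler0n.
have B0 : 0 <= B by rewrite /B addr_ge0 // mulr_ge0.
have nB0 : 0 <= n * B by apply: mulr_ge0.
exists (n * B + 1) => Z HZ s.
have BZ : n * B < Z by apply: lt_le_trans HZ; rewrite ltrDl ltr01.
have Z0 : 0 <= Z by apply: le_trans (ltW BZ).
have Bn : B <= n * B.
  rewrite -{1}(mul1r B); apply: ler_wpM2r => //; rewrite /n.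
  by rewrite -[1 in X in X <= _](mulr1n (1 : R)) ler_nat; exact: ltnW n1.
pose sstar : profile T := [ffun u => [set~ u]].
have Vstar : valid_profile sstar by move=> u; rewrite /valid_strategy ffunE !inE eqxx.
have Sstar : social_cost d Z alpha sstar <= n * B.
  rewrite /social_cost -sum_constT; apply: ler_sum => u _.
  by apply: cost_all => //; rewrite ffunE.
have Bupd : forall (s0 : profile T) u, cost d Z alpha (update s0 u [set~ u]) u <= B.
  by move=> s0 u; apply: cost_all => //; rewrite /update ffunE eqxx.
split.
- case=> V N.
  have Cs : forall u, cost d Z alpha s u <= B.
    move=> u; apply: le_trans (Bupd s u).
    by apply: N; rewrite /valid_strategy !inE eqxx.
  have Fs : full d s.
    apply/forallP => a; apply/forallP => b; apply/implyP => /eqP dab.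
    apply/negPn/negP => nb.
    have := cost_nonfull M Z0 a0 dab nb.
    have := le_trans (Cs a) Bn => h1 h2.
    by have := lt_le_trans (le_lt_trans (le_trans h2 h1) BZ) (lexx Z); rewrite ltxx.
  split => // s' V'.
  case: (boolP (full d s')) => F'.
    rewrite /social_cost; apply: ler_sum => u _.
    apply: le_trans (N u (s' u) (V' u)) _.
    rewrite (cost_full _ _ M (full_update u Fs F') F') //.
    by rewrite /update ffunE eqxx.
  apply: le_trans (nonfull_social M Z0 a0 F').
  apply: ltW; apply: le_lt_trans BZ.
  rewrite /social_cost -sum_constT; apply: ler_sum => u _; exact: Cs.
- case=> V O.
  have Fs : full d s.
    apply/negPn/negP => nF.
    have := le_trans (nonfull_social M Z0 a0 nF) (O _ Vstar).
    move=> h; have := lt_le_trans (le_lt_trans (le_trans h Sstar) BZ) (lexx Z).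
    by rewrite ltxx.
  split => // u S VS.
  have VU : valid_profile (update s u S).
    by move=> w; rewrite /update ffunE; case: eqP => [->|]; [exact: VS | move=> _; exact: V].
  case: (boolP (full d (update s u S))) => F'.
    have := O _ VU; rewrite /social_cost (bigD1 u) //= [X in _ <= X](bigD1 u) //=.
    have -> : \sum_(w | w != u) cost d Z alpha (update s u S) w =
              \sum_(w | w != u) cost d Z alpha s w.
      apply: eq_bigr => w nw; apply: (cost_full _ _ M F' Fs).
      by rewrite /update ffunE (negbTE nw).
    by rewrite lerD2r.
  apply: le_trans (nonfull_update M Z0 a0 Fs F').
  apply: le_trans (cost_le_social d s u Z0 a0) _.
  apply: le_trans (O _ Vstar) _.
  exact: ltW (le_lt_trans Sstar BZ).
Qed.
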